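(* Let $(X_n,x_n)$ be pointed proper metric spaces, $\Gamma_n\le\mathrm{Isom}(X_n)$, and let $\omega$ be a non-principal ultrafilter. If the ultralimit space $X_\omega$ is proper, then the ultralimit group $\Gamma_\omega$ is a closed subgroup of $\mathrm{Isom}(X_\omega)$ (for the topology of uniform convergence on compact subsets).
   Context: A non-principal ultrafilter $\omega$ is a finitely additive $\{0,1\}$-valued measure on subsets of $\mathbb N$ vanishing on finite sets; $\omega$-$\lim a_n$ denotes the ultralimit of a bounded real sequence. The ultralimit $(X_\omega,x_\omega)$ consists of sequences $(y_n)$, $y_n\in X_n$, with $d(x_n,y_n)\le M$ $\omega$-a.s. for some $M$, modulo $\omega$-$\lim d(y_n,y'_n)=0$, with metric $\omega$-$\lim d(y_n,y'_n)$. A sequence $g_n\in\mathrm{Isom}(X_n)$ is admissible if $d(g_nx_n,x_n)\le M$ $\omega$-a.s. for some $M$; it defines an isometry $\omega$-$\lim g_n$ of $X_\omega$ by $(y_n)\mapsto(g_ny_n)$. The ultralimit group is $\Gamma_\omega=\{\omega\text{-}\lim g_n: (g_n)\text{ admissible}, g_n\in\Gamma_n\ \omega\text{-a.s.}\}$. *)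

(* Defs.v *)
From Stdlib Require Import Reals Classical ClassicalEpsilon List.
Open Scope R_scope.
Set Implicit Arguments.
Unset Strict Implicit.

Definition is_metric (T : Type) (d : T -> T -> R) : Prop :=
  (forall a b, d a b = 0 <-> a = b) /\
  (forall a b, d a b = d b a) /\
  (forall a b c, d a c <= d a b + d b c).

Definition mopen (T : Type) (d : T -> T -> R) (U : T -> Prop) : Prop :=
  forall a, U a -> exists r, 0 < r /\ forall b, d a b < r -> U b.

Definition mcompact (T : Type) (d : T -> T -> R) (K : T -> Prop) : Prop :=
  forall (I : Type) (U : I -> T -> Prop),
    (forall i, mopen d (U i)) ->
    (forall a, K a -> exists i, U i a) ->
    exists l : list I, forall a, K a -> exists i, In i l /\ U i a.

Definition mproper (T : Type) (d : T -> T -> R) : Prop :=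
  forall a r, mcompact d (fun b => d a b <= r).

Definition isometry (T : Type) (d : T -> T -> R) (f : T -> T) : Prop :=
  (forall a b, d (f a) (f b) = d a b) /\ (forall b, exists a, f a = b).

Definition is_subgroup_isom (T : Type) (d : T -> T -> R) (G : (T -> T) -> Prop) : Prop :=
  (forall g, G g -> isometry d g) /\
  G (fun a => a) /\
  (forall g h, G g -> G h -> G (fun a => g (h a))) /\
  (forall g, G g -> exists h, G h /\ (forall a, h (g a) = a) /\ (forall a, g (h a) = a)).

(* G (a set of isometries) is closed in Isom(T,d) for the topology of
   uniform convergence on compact subsets: every isometry f lying in the
   closure of G (every basic neighbourhood {h | sup_K d(h,f) < eps} of f
   meets G) belongs to G. *)
Definition ucc_closed (T : Type) (d : T -> T -> R) (G : (T -> T) -> Prop) : Prop :=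
  forall f, isometry d f ->
    (forall K, mcompact d K -> forall eps, 0 < eps ->
       exists g, G g /\ forall a, K a -> d (g a) (f a) < eps) ->
    G f.

Definition nonprincipal_ultrafilter (om : (nat -> Prop) -> R) : Prop :=
  (forall A, om A = 0 \/ om A = 1) /\
  om (fun _ => True) = 1 /\
  (forall A B, (forall n, A n -> B n -> False) ->
     om (fun n => A n \/ B n) = om A + om B) /\
  (forall A, (exists N, forall n, A n -> (n < N)%nat) -> om A = 0).

Definition om_as (om : (nat -> Prop) -> R) (P : nat -> Prop) : Prop := om P = 1.

Definition ulim (om : (nat -> Prop) -> R) (a : nat -> R) (L : R) : Prop :=
  forall eps, 0 < eps -> om_as om (fun n => Rabs (a n - L) < eps).

Definition adm_seq (X : nat -> Type) (d : forall n, X n -> X n -> R)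
  (om : (nat -> Prop) -> R) (x : forall n, X n) (y : forall n, X n) : Prop :=
  exists M, om_as om (fun n => d n (x n) (y n) <= M).

Definition useq_equiv (X : nat -> Type) (d : forall n, X n -> X n -> R)
  (om : (nat -> Prop) -> R) (y z : forall n, X n) : Prop :=
  ulim om (fun n => d n (y n) (z n)) 0.

(* Points of the ultralimit X_omega: equivalence classes of admissible sequences *)
Record upoint (X : nat -> Type) (d : forall n, X n -> X n -> R)
  (om : (nat -> Prop) -> R) (x : forall n, X n) := UPoint {
  ucls : (forall n, X n) -> Prop;
  ucls_ok : exists y, adm_seq d om x y /\
              forall z, ucls z <-> (adm_seq d om x z /\ useq_equiv d om y z)
}.
Arguments ucls {X d om x} _ _.

Definition udist (X : nat -> Type) (d : forall n, X n -> X n -> R)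
  (om : (nat -> Prop) -> R) (x : forall n, X n) (p q : upoint d om x) : R :=
  epsilon (inhabits 0) (fun L => forall y z, ucls p y -> ucls q z ->
                                   ulim om (fun n => d n (y n) (z n)) L).

Definition adm_isom_seq (X : nat -> Type) (d : forall n, X n -> X n -> R)
  (om : (nat -> Prop) -> R) (x : forall n, X n) (g : forall n, X n -> X n) : Prop :=
  (forall n, isometry (d n) (g n)) /\
  exists M, om_as om (fun n => d n (g n (x n)) (x n) <= M).

Definition is_ulim_map (X : nat -> Type) (d : forall n, X n -> X n -> R)
  (om : (nat -> Prop) -> R) (x : forall n, X n) (g : forall n, X n -> X n)
  (f : upoint d om x -> upoint d om x) : Prop :=
  forall p y, ucls p y -> ucls (f p) (fun n => g n (y n)).

Definition ugroup (X : nat -> Type) (d : forall n, X n -> X n -> R)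
  (om : (nat -> Prop) -> R) (x : forall n, X n)
  (Gam : forall n, (X n -> X n) -> Prop) (f : upoint d om x -> upoint d om x) : Prop :=
  exists g, adm_isom_seq d om x g /\ om_as om (fun n => Gam n (g n)) /\
            @is_ulim_map X d om x g f.
Arguments ugroup {X} d om x Gam f.
Arguments udist {X} d om x p q.
Arguments is_ulim_map {X} d om x g f.

(* Main.v *)
Require Import Defs.
From Stdlib Require Import Reals Lra Lia Classical ClassicalEpsilon FunctionalExtensionality PropExtensionality ProofIrrelevance List.
Open Scope R_scope.

Lemma abs_le_e a b : Rabs a <= b -> - b <= a <= b.
Proof. intros h. pose proof (Rle_abs a). pose proof (Rle_abs (-a)). rewrite Rabs_Ropp in H0. lra. Qed.

Section UF.
Variable om : (nat -> Prop) -> R.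
Hypothesis Hom : nonprincipal_ultrafilter om.

Lemma om_ext A B : (forall n, A n <-> B n) -> om A = om B.
Proof.
  intros H. assert (A = B) as -> ; [|reflexivity].
  apply functional_extensionality; intros n; apply propositional_extensionality; auto.
Qed.

Lemma om01 A : om A = 0 \/ om A = 1.
Proof. destruct Hom as [h _]; apply h. Qed.

Lemma om_add A B : (forall n, A n -> B n -> False) -> om (fun n => A n \/ B n) = om A + om B.
Proof. destruct Hom as [_ [_ [h _]]]; apply h. Qed.

Lemma om_compl A : om A + om (fun n => ~ A n) = 1.
Proof.
  rewrite <- om_add by tauto. destruct Hom as [_ [h _]]. rewrite <- h.
  apply om_ext. intros n; split; auto. intros _; apply classic.
Qed.

Lemma om_fin A : (exists N, forall n, A n -> (n < N)%nat) -> om A = 0.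
Proof. destruct Hom as [_ [_ [_ h]]]; apply h. Qed.

Lemma om_as_mono (A B : nat -> Prop) : om_as om A -> (forall n, A n -> B n) -> om_as om B.
Proof.
  unfold om_as; intros HA H.
  assert (E : om B = om A + om (fun n => B n /\ ~ A n)).
  { rewrite <- om_add by tauto. apply om_ext; intros n; split.
    - intros Hb; destruct (classic (A n)); auto.
    - intros [a|[b _]]; auto. }
  destruct (om01 B) as [h|h]; [|auto].
  destruct (om01 (fun n => B n /\ ~ A n)); lra.
Qed.

Lemma om_as_not A : om_as om A -> om_as om (fun n => ~ A n) -> False.
Proof. unfold om_as; intros h1 h2. pose proof (om_compl A). lra. Qed.

Lemma om_as_and (A B : nat -> Prop) : om_as om A -> om_as om B -> om_as om (fun n => A n /\ B n).
Proof.
  intros HA HB. destruct (om01 (fun n => A n /\ B n)) as [h|h]; [|exact h].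
  assert (E : om A = om (fun n => A n /\ B n) + om (fun n => A n /\ ~ B n)).
  { rewrite <- om_add by tauto. apply om_ext; intros n; split.
    - intros a; destruct (classic (B n)); auto.
    - intros [[a _]|[a _]]; auto. }
  unfold om_as in HA. assert (om_as om (fun n => A n /\ ~ B n)) by (unfold om_as; lra).
  exfalso. apply (om_as_not B HB). eapply om_as_mono; [exact H|]. simpl; tauto.
Qed.

Lemma om_as_ex A : om_as om A -> exists n, A n.
Proof.
  intros h. apply NNPP; intros hn. unfold om_as in h.
  rewrite om_fin in h. lra. exists 0%nat. intros n an; exfalso; apply hn; eauto.
Qed.

Lemma om_as_True : om_as om (fun _ => True).
Proof. destruct Hom as [_ [h _]]; exact h. Qed.

Lemma om_as_all (A : nat -> Prop) : (forall n, A n) -> om_as om A.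
Proof. intros h; eapply om_as_mono; [apply om_as_True|]; auto. Qed.

Lemma om_as_ge N : om_as om (fun n => (N <= n)%nat).
Proof.
  pose proof (om_compl (fun n => (N <= n)%nat)). cbv beta in H.
  rewrite (om_fin (fun n => ~ (N <= n)%nat)) in H. unfold om_as; lra.
  exists N; intros; lia.
Qed.

Lemma om_as_list {T} (l : list T) (P : T -> nat -> Prop) :
  (forall q, In q l -> om_as om (P q)) -> om_as om (fun n => forall q, In q l -> P q n).
Proof.
  induction l as [|a l IH]; intros H.
  - apply om_as_all; intros n q [].
  - eapply om_as_mono. apply om_as_and. apply (H a); left; auto. apply IH; intros; apply H; right; auto.
    intros n [h1 h2] q [<-|hq]; auto.
Qed.

Lemma om_as_le (k : nat) (P : nat -> nat -> Prop) :
  (forall j, (j <= k)%nat -> om_as om (P j)) -> om_as om (fun n => forall j, (j <= k)%nat -> P j n).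
Proof.
  induction k as [|k IH]; intros H.
  - eapply om_as_mono. apply (H 0%nat); lia. intros n h j hj. replace j with 0%nat by lia; auto.
  - eapply om_as_mono. apply om_as_and. apply (H (S k)); lia. apply IH; intros; apply H; lia.
    intros n [h1 h2] j hj. destruct (Nat.eq_dec j (S k)) as [->|]; auto. apply h2; lia.
Qed.

Lemma ulim_unique a L1 L2 : ulim om a L1 -> ulim om a L2 -> L1 = L2.
Proof.
  intros h1 h2. apply NNPP; intros hne.
  set (e := Rabs (L1 - L2) / 2).
  assert (0 < e) by (unfold e; pose proof (Rabs_pos_lt (L1 - L2)); assert (L1 - L2 <> 0) by lra; specialize (H H0); lra).
  destruct (om_as_ex _ (om_as_and _ _ (h1 e H) (h2 e H))) as [n [u v]].
  unfold e in *. assert (Rabs (L1 - L2) <= Rabs (a n - L1) + Rabs (a n - L2)).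
  { replace (L1 - L2) with (-(a n - L1) + (a n - L2)) by ring. eapply Rle_trans. apply Rabs_triang. rewrite Rabs_Ropp; lra. }
  lra.
Qed.

Lemma ulim_lt a L c : ulim om a L -> L < c -> om_as om (fun n => a n < c).
Proof.
  intros h hc. eapply om_as_mono. apply (h (c - L)); lra.
  intros n hn. apply Rabs_def2 in hn. lra.
Qed.

Lemma ulim_gt a L c : ulim om a L -> c < L -> om_as om (fun n => c < a n).
Proof.
  intros h hc. eapply om_as_mono. apply (h (L - c)); lra.
  intros n hn. apply Rabs_def2 in hn. lra.
Qed.

Lemma ulim_le a b La Lb : ulim om a La -> ulim om b Lb -> om_as om (fun n => a n <= b n) -> La <= Lb.
Proof.
  intros ha hb h. apply Rnot_lt_le; intros hl.
  set (m := (La + Lb)/2).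
  destruct (om_as_ex _ (om_as_and _ _ h (om_as_and _ _ (ulim_gt a La m ha ltac:(unfold m; lra)) (ulim_lt b Lb m hb ltac:(unfold m; lra))))) as [n [u [v w]]].
  lra.
Qed.

Lemma ulim_plus a b La Lb : ulim om a La -> ulim om b Lb -> ulim om (fun n => a n + b n) (La + Lb).
Proof.
  intros ha hb e he. eapply om_as_mono. apply om_as_and. apply (ha (e/2)); lra. apply (hb (e/2)); lra.
  intros n [u v]. replace (a n + b n - (La + Lb)) with ((a n - La) + (b n - Lb)) by ring.
  eapply Rle_lt_trans. apply Rabs_triang. lra.
Qed.

Lemma ulim_close a c L b1 b2 : ulim om a L -> ulim om b1 0 -> ulim om b2 0 ->
  (forall n, Rabs (c n - a n) <= Rabs (b1 n) + Rabs (b2 n)) -> ulim om c L.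
Proof.
  intros ha h1 h2 H e he. eapply om_as_mono. apply om_as_and. apply (ha (e/3)); lra.
  apply om_as_and. apply (h1 (e/3)); lra. apply (h2 (e/3)); lra.
  intros n [u [v w]]. rewrite Rminus_0_r in v, w. specialize (H n).
  replace (c n - L) with ((c n - a n) + (a n - L)) by ring.
  eapply Rle_lt_trans. apply Rabs_triang. lra.
Qed.

Lemma ulim_exists a M : om_as om (fun n => Rabs (a n) <= M) -> exists L, ulim om a L.
Proof.
  intros hM.
  set (E := fun t => om_as om (fun n => t <= a n)).
  assert (bnd : bound E).
  { exists M. intros t ht. apply Rnot_lt_le; intros hlt.
    destruct (om_as_ex _ (om_as_and _ _ ht hM)) as [n [u v]]. apply abs_le_e in v. lra. }
  assert (ne : exists t, E t).
  { exists (-M). eapply om_as_mono. exact hM. intros n h. apply abs_le_e in h. lra. }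
  destruct (completeness E bnd ne) as [L [hub hlub]].
  exists L. intros e he.
  assert (h1 : om_as om (fun n => a n < L + e)).
  { destruct (om01 (fun n => L + e <= a n)) as [h|h].
    - pose proof (om_compl (fun n => L + e <= a n)). rewrite h in H.
      eapply om_as_mono. unfold om_as. rewrite Rplus_0_l in H. exact H. intros n hn; lra.
    - exfalso. assert (L + e <= L) by (apply hub; exact h). lra. }
  assert (h2 : exists t, E t /\ L - e < t).
  { apply NNPP; intros hn. assert (L <= L - e); [|lra]. apply hlub. intros t ht.
    apply Rnot_lt_le; intros hl. apply hn; eauto. }
  destruct h2 as [t [ht hlt]].
  eapply om_as_mono. apply (om_as_and _ _ h1 ht). intros n [u v]. apply Rabs_def1; lra.
Qed.

End UF.

Lemma metric_nonneg T (dd : T -> T -> R) : is_metric dd -> forall a b, 0 <= dd a b.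
Proof.
  intros [h1 [h2 h3]] a b. pose proof (h3 a b a). rewrite (h2 b a) in H.
  assert (dd a a = 0) by (apply h1; auto). lra.
Qed.

Section Pts.
Variable X : nat -> Type.
Variable d : forall n, X n -> X n -> R.
Variable x : forall n, X n.
Variable om : (nat -> Prop) -> R.
Hypothesis Hd : forall n, is_metric (d n).
Hypothesis Hom : nonprincipal_ultrafilter om.

Notation seq := (forall n, X n).
Notation adm := (adm_seq d om x).
Notation eqv := (useq_equiv d om).
Notation pt := (upoint d om x).
Notation ud := (udist d om x).

Lemma d_nn n a b : 0 <= d n a b.
Proof. apply metric_nonneg; auto. Qed.
Lemma d_sym n a b : d n a b = d n b a.
Proof. destruct (Hd n) as [_ [h _]]; auto. Qed.
Lemma d_tri n a b c : d n a c <= d n a b + d n b c.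
Proof. destruct (Hd n) as [_ [_ h]]; auto. Qed.
Lemma d_refl n a : d n a a = 0.
Proof. destruct (Hd n) as [h _]; apply h; auto. Qed.
Lemma d_zero n a b : d n a b = 0 -> a = b.
Proof. destruct (Hd n) as [h _]; apply h; auto. Qed.

Lemma ulim_zero_all (a : nat -> R) : (forall n, a n = 0) -> ulim om a 0.
Proof. intros h e he. apply (om_as_all om Hom); auto. intros n; rewrite h, Rminus_0_r, Rabs_R0; auto. Qed.

Lemma eqv_refl y : eqv y y.
Proof. apply ulim_zero_all; intros; apply d_refl. Qed.

Lemma eqv_sym y z : eqv y z -> eqv z y.
Proof. unfold useq_equiv. intros h e he. eapply (om_as_mono om Hom); [apply (h e he)|]. intros n; rewrite d_sym; auto. Qed.

Lemma eqv_trans y z w : eqv y z -> eqv z w -> eqv y w.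
Proof.
  unfold useq_equiv. intros h1 h2.
  apply (ulim_close om Hom (fun _ => 0) _ 0 _ _ (ulim_zero_all _ (fun _ => eq_refl)) h1 h2).
  intros n. rewrite Rminus_0_r. pose proof (d_tri n (y n) (z n) (w n)).
  pose proof (d_nn n (y n) (w n)). pose proof (d_nn n (y n) (z n)). pose proof (d_nn n (z n) (w n)).
  rewrite !Rabs_right by lra. lra.
Qed.

Lemma dist_exists y z : adm y -> adm z -> exists L, ulim om (fun n => d n (y n) (z n)) L.
Proof.
  intros [M1 h1] [M2 h2]. apply (ulim_exists om Hom _ (M1 + M2)).
  eapply (om_as_mono om Hom). apply (om_as_and om Hom _ _ h1 h2). intros n [u v].
  pose proof (d_tri n (y n) (x n) (z n)). rewrite (d_sym n (y n) (x n)) in H. pose proof (d_nn n (y n) (z n)).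
  rewrite Rabs_right; lra.
Qed.

Definition rep (p : pt) : seq := epsilon (inhabits x) (fun y => ucls p y).

Lemma ucls_ok' (p : pt) : exists y, adm y /\ forall z, ucls p z <-> adm z /\ eqv y z.
Proof. exact (ucls_ok p). Qed.

Lemma rep_spec (p : pt) : ucls p (rep p).
Proof.
  unfold rep. apply epsilon_spec. destruct (ucls_ok' p) as [y [hy h]]. exists y. apply h. split; auto. apply eqv_refl.
Qed.

Lemma ucls_adm (p : pt) y : ucls p y -> adm y.
Proof. destruct (ucls_ok' p) as [y0 [hy h]]. intros hp; apply h; auto. Qed.

Lemma ucls_eqv (p : pt) y z : ucls p y -> ucls p z -> eqv y z.
Proof.
  destruct (ucls_ok' p) as [y0 [hy h]]. intros h1 h2. apply h in h1. apply h in h2.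
  eapply eqv_trans. apply eqv_sym. apply h1. apply h2.
Qed.

Lemma ucls_transfer (p : pt) y z : ucls p y -> adm z -> eqv y z -> ucls p z.
Proof.
  destruct (ucls_ok' p) as [y0 [hy h]]. intros h1 hz e. apply h. apply h in h1. split; auto.
  eapply eqv_trans. apply h1. auto.
Qed.

Lemma pt_ext (p q : pt) : (forall z, ucls p z <-> ucls q z) -> p = q.
Proof.
  destruct p as [cp op], q as [cq oq]; simpl. intros h.
  assert (cp = cq) by (apply functional_extensionality; intros z; apply propositional_extensionality; auto).
  subst cq. f_equal. apply proof_irrelevance.
Qed.

Lemma pt_share (p q : pt) y : ucls p y -> ucls q y -> p = q.
Proof.
  intros hp hq. apply pt_ext. intros z; split; intros hz.
  - apply (ucls_transfer q y z hq). eapply ucls_adm; exact hz. exact (ucls_eqv p y z hp hz).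
  - apply (ucls_transfer p y z hp). eapply ucls_adm; exact hz. exact (ucls_eqv q y z hq hz).
Qed.

Lemma pt_exists y : adm y -> exists p : pt, ucls p y.
Proof.
  intros hy. exists (@UPoint X d om x (fun z => adm z /\ eqv y z) (ex_intro _ y (conj hy (fun z => iff_refl _)))).
  simpl. split; auto. apply eqv_refl.
Qed.

Lemma udist_spec (p q : pt) y z : ucls p y -> ucls q z -> ulim om (fun n => d n (y n) (z n)) (ud p q).
Proof.
  intros hy hz. unfold udist.
  assert (ex : exists L, forall y z, ucls p y -> ucls q z -> ulim om (fun n => d n (y n) (z n)) L).
  { destruct (dist_exists (rep p) (rep q)) as [L hL]. eapply ucls_adm; apply rep_spec. eapply ucls_adm; apply rep_spec.
    exists L. intros y' z' h1 h2.
    apply (ulim_close om Hom _ _ L (fun n => d n (rep p n) (y' n)) (fun n => d n (rep q n) (z' n)) hL).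
    eapply ucls_eqv; [apply rep_spec|auto]. eapply ucls_eqv; [apply rep_spec|auto].
    intros n. pose proof (d_nn n (rep p n) (y' n)). pose proof (d_nn n (rep q n) (z' n)).
    rewrite (Rabs_right (d n (rep p n) (y' n))), (Rabs_right (d n (rep q n) (z' n))) by lra.
    pose proof (d_tri n (y' n) (rep p n) (z' n)). pose proof (d_tri n (rep p n) (rep q n) (z' n)).
    pose proof (d_tri n (rep p n) (y' n) (rep q n)). pose proof (d_tri n (y' n) (z' n) (rep q n)).
    rewrite (d_sym n (y' n) (rep p n)) in *. rewrite (d_sym n (z' n) (rep q n)) in *.
    apply Rabs_le. lra. }
  pose proof (epsilon_spec (inhabits 0) _ ex). apply H; auto.
Qed.

Lemma udist_eq (p q : pt) y z L : ucls p y -> ucls q z -> ulim om (fun n => d n (y n) (z n)) L -> ud p q = L.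
Proof. intros h1 h2 h. eapply ulim_unique. apply Hom. apply udist_spec; eauto. auto. Qed.

Lemma udist_lt (p q : pt) y z c : ucls p y -> ucls q z -> ud p q < c -> om_as om (fun n => d n (y n) (z n) < c).
Proof. intros h1 h2 h. eapply ulim_lt; eauto. apply udist_spec; auto. Qed.

Lemma udist_nn (p q : pt) : 0 <= ud p q.
Proof.
  eapply (ulim_le om Hom (fun _ => 0)). apply ulim_zero_all; auto. apply udist_spec; apply rep_spec.
  apply (om_as_all om Hom); intros; apply d_nn.
Qed.

Lemma udist_sym (p q : pt) : ud p q = ud q p.
Proof.
  apply (udist_eq _ _ (rep p) (rep q)); try apply rep_spec.
  replace (fun n => d n (rep p n) (rep q n)) with (fun n => d n (rep q n) (rep p n)).
  apply udist_spec; apply rep_spec.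
  apply functional_extensionality; intros; apply d_sym.
Qed.

Lemma udist_refl (p : pt) : ud p p = 0.
Proof. apply (udist_eq _ _ (rep p) (rep p)); try apply rep_spec. apply ulim_zero_all; intros; apply d_refl. Qed.

Lemma udist_tri (p q r : pt) : ud p r <= ud p q + ud q r.
Proof.
  eapply (ulim_le om Hom).
  apply (udist_spec p r (rep p) (rep r)); apply rep_spec.
  apply (ulim_plus om Hom). apply udist_spec; apply rep_spec. apply udist_spec; apply rep_spec.
  apply (om_as_all om Hom); intros; apply d_tri.
Qed.


Lemma iso_inj n g : isometry (d n) g -> forall a b, g a = g b -> a = b.
Proof. intros [h _] a b e. apply (d_zero n). rewrite <- h, e. apply d_refl. Qed.

Definition invf n (g : X n -> X n) : X n -> X n := fun b => epsilon (inhabits b) (fun a => g a = b).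

Lemma invf_r n g b : isometry (d n) g -> g (invf n g b) = b.
Proof. intros [_ h]. unfold invf. apply epsilon_spec. apply h. Qed.

Lemma invf_l n g a : isometry (d n) g -> invf n g (g a) = a.
Proof. intros hg. apply (iso_inj n g hg). apply invf_r; auto. Qed.

Lemma invf_iso n g : isometry (d n) g -> isometry (d n) (invf n g).
Proof.
  intros hg. split.
  - intros a b. destruct hg as [h1 h2]. rewrite <- (h1 (invf n g a)). rewrite !invf_r; auto; split; auto.
  - intros b. exists (g b). apply invf_l; auto.
Qed.

Lemma adm_image G y : adm_isom_seq d om x G -> adm y -> adm (fun n => G n (y n)).
Proof.
  intros [hi [M hM]] [My hy]. exists (M + My).
  eapply (om_as_mono om Hom). apply (om_as_and om Hom _ _ hM hy). intros n [u v].
  pose proof (d_tri n (x n) (G n (x n)) (G n (y n))). destruct (hi n) as [h1 _]. rewrite h1 in H.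
  rewrite (d_sym n (x n) (G n (x n))) in H. lra.
Qed.

Lemma eqv_image G y z : (forall n, isometry (d n) (G n)) -> eqv y z -> eqv (fun n => G n (y n)) (fun n => G n (z n)).
Proof.
  intros hi h. unfold useq_equiv. replace (fun n => d n (G n (y n)) (G n (z n))) with (fun n => d n (y n) (z n)); auto.
  apply functional_extensionality_dep; intros n. destruct (hi n) as [h1 _]. rewrite h1; auto.
Qed.

Definition Fmap (G : forall n, X n -> X n) (p : pt) : pt :=
  epsilon (inhabits p) (fun q => ucls q (fun n => G n (rep p n))).

Lemma Fmap_spec G : adm_isom_seq d om x G -> is_ulim_map d om x G (Fmap G).
Proof.
  intros hG p y hy.
  assert (h : ucls (Fmap G p) (fun n => G n (rep p n))).
  { unfold Fmap. apply epsilon_spec. apply pt_exists. apply adm_image; auto. eapply ucls_adm; apply rep_spec. }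
  eapply ucls_transfer. exact h. apply adm_image; auto. eapply ucls_adm; eauto.
  apply eqv_image. apply hG. eapply ucls_eqv. apply rep_spec. auto.
Qed.

Variable Gam : forall n, (X n -> X n) -> Prop.
Hypothesis HG : forall n, is_subgroup_isom (d n) (Gam n).

Notation UG := (ugroup d om x Gam).

Lemma UG_iso f : UG f -> isometry ud f.
Proof.
  intros [G [hG [hGam hf]]]. split.
  - intros p q. apply (udist_eq _ _ (fun n => G n (rep p n)) (fun n => G n (rep q n))).
    apply hf; apply rep_spec. apply hf; apply rep_spec.
    replace (fun n => d n (G n (rep p n)) (G n (rep q n))) with (fun n => d n (rep p n) (rep q n)).
    apply udist_spec; apply rep_spec.
    apply functional_extensionality_dep; intros n. destruct hG as [hi _]. destruct (hi n) as [h1 _]. rewrite h1; auto.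
  - intros q. set (H := fun n => invf n (G n)).
    assert (hH : adm (fun n => H n (rep q n))).
    { destruct hG as [hi [M hM]]. destruct (ucls_adm _ _ (rep_spec q)) as [Mq hq]. exists (M + Mq).
      eapply (om_as_mono om Hom). apply (om_as_and om Hom _ _ hM hq). intros n [u v].
      unfold H. destruct (hi n) as [h1 _]. rewrite <- (h1 (x n)). rewrite invf_r by auto.
      pose proof (d_tri n (G n (x n)) (x n) (rep q n)). lra. }
    destruct (pt_exists _ hH) as [p hp]. exists p.
    eapply pt_share. apply (hf _ _ hp). unfold H. 
    replace (fun n => G n (invf n (G n) (rep q n))) with (rep q). apply rep_spec.
    apply functional_extensionality_dep; intros n. rewrite invf_r; auto. apply hG.
Qed.

Lemma UG_id : UG (fun p => p).
Proof.
  exists (fun n a => a). split; [split|split].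
  - intros n; split; auto. intros b; exists b; auto.
  - exists 0. apply (om_as_all om Hom). intros n; rewrite d_refl; lra.
  - apply (om_as_all om Hom). intros n; apply HG.
  - intros p y hy. exact hy.
Qed.

Lemma UG_comp f1 f2 : UG f1 -> UG f2 -> UG (fun p => f1 (f2 p)).
Proof.
  intros [G1 [[hi1 [M1 hM1]] [hGam1 hf1]]] [G2 [[hi2 [M2 hM2]] [hGam2 hf2]]].
  exists (fun n a => G1 n (G2 n a)). split; [split|split].
  - intros n; split.
    + intros a b. destruct (hi1 n) as [h1 _], (hi2 n) as [h2 _]. rewrite h1, h2; auto.
    + intros b. destruct (hi1 n) as [_ s1], (hi2 n) as [_ s2]. destruct (s1 b) as [c hc]. destruct (s2 c) as [a ha].
      exists a; rewrite ha; auto.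
  - exists (M1 + M2). eapply (om_as_mono om Hom). apply (om_as_and om Hom _ _ hM1 hM2). intros n [u v].
    pose proof (d_tri n (G1 n (G2 n (x n))) (G1 n (x n)) (x n)). destruct (hi1 n) as [h1 _]. rewrite h1 in H. lra.
  - eapply (om_as_mono om Hom). apply (om_as_and om Hom _ _ hGam1 hGam2). intros n [u v].
    apply HG; auto.
  - intros p y hy. apply hf1. apply hf2. auto.
Qed.

Lemma UG_inv f : UG f -> exists h, UG h /\ (forall a, h (f a) = a) /\ (forall a, f (h a) = a).
Proof.
  intros [G [hG [hGam hf]]]. set (H := fun n => invf n (G n)).
  assert (hH : adm_isom_seq d om x H).
  { destruct hG as [hi [M hM]]. split. intros n; apply invf_iso; auto.
    exists M. eapply (om_as_mono om Hom). exact hM. intros n hn.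
    unfold H. destruct (hi n) as [h1 _]. rewrite <- (h1 (invf n (G n) (x n))). rewrite invf_r by auto.
    rewrite d_sym; auto. }
  exists (Fmap H). split; [|split].
  - exists H. split; auto. split; [|apply Fmap_spec; auto].
    eapply (om_as_mono om Hom). exact hGam. intros n hn.
    destruct (HG n) as [_ [_ [_ hinv]]]. destruct (hinv _ hn) as [h [hh [hl hr]]].
    replace (H n) with h; auto. apply functional_extensionality_dep; intros b. unfold H.
    apply (iso_inj n (G n)). apply hG. rewrite invf_r; auto. apply hG.
  - intros p. eapply pt_share. apply (Fmap_spec H hH). apply hf. apply rep_spec.
    assert (E : (fun n => H n (G n (rep p n))) = rep p).
    { apply functional_extensionality_dep; intros n. unfold H; rewrite invf_l; auto. apply hG. }
    cbv beta. rewrite E. apply rep_spec.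
  - intros p. eapply pt_share. apply hf. apply (Fmap_spec H hH). apply rep_spec.
    assert (E : (fun n => G n (H n (rep p n))) = rep p).
    { apply functional_extensionality_dep; intros n. unfold H; rewrite invf_r; auto. apply hG. }
    cbv beta. rewrite E. apply rep_spec.
Qed.

Lemma UG_subgroup : is_subgroup_isom ud UG.
Proof.
  split; [apply UG_iso|split; [apply UG_id|split; [apply UG_comp|apply UG_inv]]].
Qed.

Lemma my_choice (A B : Type) (P : A -> B -> Prop) : (forall a, exists b, P a b) -> exists f, forall a, P a (f a).
Proof. intros H. exists (fun a => proj1_sig (constructive_indefinite_description _ (H a))).
  intros a. exact (proj2_sig (constructive_indefinite_description _ (H a))). Qed.

Fixpoint search (P : nat -> Prop) (m : nat) : nat :=
  match m with
  | O => O
  | S m' => if excluded_middle_informative (P (S m')) then S m' else search P m'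
  end.

Lemma search_spec P m k : (k <= m)%nat -> P k -> P (search P m) /\ (k <= search P m)%nat.
Proof.
  induction m as [|m IH]; intros hk hp; simpl.
  - replace k with 0%nat in * by lia. split; auto.
  - destruct (excluded_middle_informative (P (S m))) as [h|h].
    + split; auto.
    + destruct (Nat.eq_dec k (S m)) as [->|hne]; [contradiction|]. apply IH; auto. lia.
Qed.

Definition ee (j : nat) : R := / (INR j + 1).

Lemma ee_pos j : 0 < ee j.
Proof. unfold ee. apply Rinv_0_lt_compat. pose proof (pos_INR j). lra. Qed.

Lemma ee_le1 j : ee j <= 1.
Proof. unfold ee. pose proof (pos_INR j). rewrite <- Rinv_1. apply Rinv_le_contravar; lra. Qed.

Lemma ee_mono j k : (j <= k)%nat -> ee k <= ee j.
Proof. intros h. unfold ee. pose proof (pos_INR j). pose proof (le_INR _ _ h). apply Rinv_le_contravar; lra. Qed.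

Lemma ee_small eps : 0 < eps -> forall k, 3 / eps < INR k -> 3 * ee k < eps.
Proof.
  intros he k hk. unfold ee. pose proof (pos_INR k).
  assert (t : 3 < (INR k + 1) * eps).
  { apply (Rmult_lt_compat_r eps) in hk; auto. unfold Rdiv in hk. rewrite Rmult_assoc, Rinv_l in hk by lra. lra. }
  assert (u : / (INR k + 1) * (INR k + 1) = 1) by (apply Rinv_l; lra).
  assert (0 < / (INR k + 1)) by (apply Rinv_0_lt_compat; lra).
  nra.
Qed.

Lemma UG_closed : mproper ud -> ucc_closed ud UG.
Proof.
  intros HP f hfiso happ.
  assert (hx : adm x) by (exists 0; apply (om_as_all om Hom); intros n; rewrite d_refl; lra).
  destruct (pt_exists x hx) as [o ho].
  set (w := rep (f o)).
  destruct (ucls_adm _ _ (rep_spec (f o))) as [Mw hMw]. fold w in hMw.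
  assert (h1 : forall j, exists g, UG g /\ forall p, ud o p <= INR j + 1 -> ud (g p) (f p) < ee j).
  { intros j. destruct (happ (fun p => ud o p <= INR j + 1) (HP o (INR j + 1)) (ee j) (ee_pos j)) as [g [hg hg']].
    exists g; split; auto. }
  destruct (my_choice _ _ _ h1) as [gk hgk].
  assert (h2 : forall j, exists G, adm_isom_seq d om x G /\ om_as om (fun n => Gam n (G n)) /\ is_ulim_map d om x G (gk j)).
  { intros j. apply (hgk j). }
  destruct (my_choice _ _ _ h2) as [Gk hGk].
  assert (h3 : forall j, exists l : list pt, forall p, ud o p <= INR j ->
                 exists q, In q l /\ ud q p < ee j /\ ud o q <= INR j + 1).
  { intros j.
    destruct (HP o (INR j) pt (fun q p => ud q p < ee j /\ ud o q <= INR j + 1)) as [l hl].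
    - intros q p [hp hq]. exists (ee j - ud q p). split; [lra|]. intros b hb. split; auto.
      pose proof (udist_tri q p b). lra.
    - intros p hp. exists p. split. rewrite udist_refl; apply ee_pos. lra.
    - exists l. intros p hp. destruct (hl p hp) as [q [u [v v']]]. exists q; auto. }
  destruct (my_choice _ _ _ h3) as [l hl].
  pose (C := fun j n => Gam n (Gk j n) /\ d n (Gk j n (x n)) (w n) < 1 /\ d n (x n) (w n) <= Mw /\
     forall i, (i <= j)%nat -> forall q, In q (l i) -> ud o q <= INR i + 1 ->
        d n (Gk j n (rep q n)) (rep (f q) n) < ee j).
  pose (A := fun k n => (k <= n)%nat /\ forall j, (j <= k)%nat -> C j n).
  assert (C_as : forall j, om_as om (C j)).
  { intros j. destruct (hGk j) as [hadm [hgam hmap]].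
    apply (om_as_and om Hom). exact hgam.
    apply (om_as_and om Hom).
    { eapply (udist_lt (gk j o) (f o)). apply hmap; exact ho. apply rep_spec.
      pose proof (ee_le1 j). assert (ud o o <= INR j + 1) by (rewrite udist_refl; pose proof (pos_INR j); lra).
      pose proof (proj2 (hgk j) o H0). lra. }
    apply (om_as_and om Hom). exact hMw.
    apply (om_as_le om Hom j (fun i n => forall q, In q (l i) -> ud o q <= INR i + 1 ->
        d n (Gk j n (rep q n)) (rep (f q) n) < ee j)).
    intros i hi.
    apply (om_as_list om Hom (l i) (fun q n => ud o q <= INR i + 1 -> d n (Gk j n (rep q n)) (rep (f q) n) < ee j)).
    intros q _. destruct (classic (ud o q <= INR i + 1)) as [hq|hq].
    - eapply (om_as_mono om Hom). eapply (udist_lt (gk j q) (f q)). apply hmap; apply rep_spec. apply rep_spec.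
      apply (proj2 (hgk j)). pose proof (le_INR _ _ hi). lra.
      intros n hn _; exact hn.
    - apply (om_as_all om Hom). intros n hn; contradiction. }
  assert (A_as : forall k, om_as om (A k)).
  { intros k. apply (om_as_and om Hom). apply om_as_ge; auto. apply (om_as_le om Hom k C). intros; apply C_as. }
  pose (K := fun n => search (fun k => A k n) n).
  assert (KA : forall k n, A k n -> A (K n) n /\ (k <= K n)%nat).
  { intros k n hA. apply (search_spec (fun k => A k n) n k); auto. apply hA. }
  assert (KC : forall n, A 0%nat n -> C (K n) n).
  { intros n hA. destruct (KA 0%nat n hA) as [[_ h] _]. apply h. lia. }
  assert (Giso : forall j n, isometry (d n) (Gk j n)) by (intros j n; apply (hGk j)).
  exists (fun n => Gk (K n) n).
  split; [split|split].
  - intros n; apply Giso.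
  - exists (1 + Mw). eapply (om_as_mono om Hom). apply (A_as 0%nat). intros n hn.
    destruct (KC n hn) as [_ [u [v _]]]. pose proof (d_tri n (Gk (K n) n (x n)) (w n) (x n)).
    rewrite (d_sym n (w n) (x n)) in H. lra.
  - eapply (om_as_mono om Hom). apply (A_as 0%nat). intros n hn. apply (KC n hn).
  - intros p y hy.
    set (z := rep (f p)).
    assert (claim : forall eps, 0 < eps -> om_as om (fun n => d n (Gk (K n) n (y n)) (z n) < eps)).
    { intros eps he.
      destruct (INR_unbounded (Rmax (ud o p) (3 / eps))) as [k hk].
      pose proof (Rmax_l (ud o p) (3/eps)). pose proof (Rmax_r (ud o p) (3/eps)).
      destruct (hl k p ltac:(lra)) as [q [hq1 [hq2 hq3]]].
      pose proof (ee_small eps he k ltac:(lra)).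
      eapply (om_as_mono om Hom).
      apply (om_as_and om Hom). apply (A_as k).
      apply (om_as_and om Hom). apply (udist_lt q p (rep q) y (ee k)); auto. apply rep_spec.
      apply (udist_lt (f q) (f p) (rep (f q)) z (ee k)); try apply rep_spec.
      destruct hfiso as [hfd _]. rewrite hfd; auto.
      intros n [hA [u v]].
      destruct (KA k n hA) as [[_ hC] hkK].
      destruct (hC (K n) (le_n _)) as [_ [_ [_ hnet]]].
      pose proof (hnet k hkK q hq1 hq3) as hgq.
      pose proof (ee_mono _ _ hkK).
      pose proof (d_tri n (Gk (K n) n (y n)) (Gk (K n) n (rep q n)) (z n)).
      pose proof (d_tri n (Gk (K n) n (rep q n)) (rep (f q) n) (z n)).
      destruct (Giso (K n) n) as [hiso _]. rewrite hiso in H3.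
      rewrite (d_sym n (y n) (rep q n)) in H3. lra. }
    apply (ucls_transfer (f p) z). apply rep_spec.
    + destruct (ucls_adm _ _ (rep_spec (f p))) as [Mz hMz]. fold z in hMz. exists (Mz + 1).
      eapply (om_as_mono om Hom). apply (om_as_and om Hom _ _ hMz (claim 1 Rlt_0_1)). intros n [u v].
      pose proof (d_tri n (x n) (z n) (Gk (K n) n (y n))). rewrite (d_sym n (z n)) in H. lra.
    + intros eps he. eapply (om_as_mono om Hom). apply (claim eps he). intros n hn.
      rewrite Rminus_0_r, Rabs_right, d_sym; auto. apply Rle_ge, d_nn.
Qed.

End Pts.

Theorem mainTheorem7 (X : nat -> Type) (d : forall n, X n -> X n -> R)
  (x : forall n, X n) (Gam : forall n, (X n -> X n) -> Prop)
  (om : (nat -> Prop) -> R) :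
  (forall n, is_metric (d n)) ->
  (forall n, mproper (d n)) ->
  (forall n, is_subgroup_isom (d n) (Gam n)) ->
  nonprincipal_ultrafilter om ->
  mproper (udist d om x) ->
  is_subgroup_isom (udist d om x) (ugroup d om x Gam) /\
  ucc_closed (udist d om x) (ugroup d om x Gam).
Proof.
  intros Hd _ HG Hom HP. split.
  - apply UG_subgroup; auto.
  - apply UG_closed; auto.
Qed.
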